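(* $W_{\max}(19,9)\in\{6,7,\dots,27\}$.
   Context: A weighing matrix of order $n$ and weight $k$ is an $n\times n$ matrix $W$ with entries in $\{1,-1,0\}$ such that $WW^T=kI_n$. Two weighing matrices $W_1,W_2$ of order $n$ and weight $k$ are unbiased if $\frac{1}{\sqrt{k}}W_1W_2^T$ is also a weighing matrix of order $n$ and weight $k$; a set is mutually unbiased if any two distinct members are unbiased. $W_{\max}(n,9)$ denotes the maximum size of a set of mutually unbiased weighing matrices of order $n$ and weight $9$. *)

(* Defs.v *)
From mathcomp Require Import all_boot all_order all_algebra all_field.
Set Implicit Arguments. Unset Strict Implicit. Unset Printing Implicit Defensive.
Import Order.TTheory GRing.Theory Num.Theory.
Local Open Scope ring_scope.

Definition weighing (n k : nat) (W : 'M[int]_n) : Prop :=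
  (forall i j, W i j \in [:: 1; -1; 0]) /\ W *m W^T = (k%:R)%:M.

Definition unbiased (n k : nat) (W1 W2 : 'M[int]_n) : Prop :=
  exists M : 'M[int]_n, weighing k M /\
    (sqrtC (k%:R : algC))^-1 *: map_mx (fun z : int => z%:~R : algC) (W1 *m W2^T)
      = map_mx (fun z : int => z%:~R : algC) M.

Definition MUWM (n k : nat) (s : seq 'M[int]_n) : Prop :=
  uniq s /\ (forall W, W \in s -> weighing k W) /\
  (forall W1 W2, W1 \in s -> W2 \in s -> W1 != W2 -> unbiased k W1 W2).

Definition is_Wmax (n k m : nat) : Prop :=
  (exists s : seq 'M[int]_n, MUWM k s /\ size s = m) /\
  (forall s : seq 'M[int]_n, MUWM k s -> (size s <= m)%N).

(* Main.v *)
Require Import Defs.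
From mathcomp Require Import all_boot all_order all_algebra all_field.
From mathcomp Require Import zify ring lra.
From Stdlib Require Import Classical.
Set Implicit Arguments. Unset Strict Implicit. Unset Printing Implicit Defensive.
Import Order.TTheory GRing.Theory Num.Theory.
Local Open Scope ring_scope.


Lemma one_le_sum (I : finType) (G : I -> int) i :
  (forall j, 0 <= G j) -> G i <= \sum_j G j.
Proof.
move=> G0; rewrite (bigD1 i) //= lerDl; exact: sumr_ge0.
Qed.

Lemma two_le_sum (I : finType) (G : I -> int) i k :
  (forall j, 0 <= G j) -> i != k -> G i + G k <= \sum_j G j.
Proof.
move=> G0 ik; rewrite (bigD1 i) //= (bigD1 k) /=; last by rewrite eq_sym.
rewrite addrA lerDl; exact: sumr_ge0.
Qed.

Lemma pattern_le (n : nat) (F : 'I_n -> 'I_n -> 'I_n -> 'I_n -> int) :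
  (forall a b c d, 0 <= F a b c d) ->
  \sum_a (F a a a a + \sum_(c | c != a) (F a a c c + F a c a c + F a c c a))
  <= \sum_a \sum_b \sum_c \sum_d F a b c d.
Proof.
move=> F0; apply: ler_sum => a _.
rewrite [X in _ <= X](bigD1 a) //=.
have S0 : forall b c, 0 <= \sum_d F a b c d by move=> b c; exact: sumr_ge0.
have S1 : forall b, 0 <= \sum_c \sum_d F a b c d by move=> b; exact: sumr_ge0.
have h1 : F a a a a + \sum_(c | c != a) F a a c c <= \sum_c \sum_d F a a c d.
  apply: (le_trans (_ : _ <= \sum_c F a a c c)).
    by rewrite [X in _ <= X](bigD1 a).
  apply: ler_sum => c _; exact: one_le_sum.
have h2 : \sum_(c | c != a) (F a c a c + F a c c a)
          <= \sum_(b | b != a) \sum_c \sum_d F a b c d.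
  apply: ler_sum => b ba.
  apply: (@le_trans _ _ (\sum_d F a b a d + \sum_d F a b b d)).
    apply: lerD; exact: one_le_sum.
  apply: two_le_sum => //; by rewrite eq_sym.
apply: le_trans (lerD h1 h2).
rewrite !big_split /=. lra.
Qed.
Lemma swap2 (X I : finType) (K : X -> X -> I -> int) :
  \sum_x \sum_y \sum_b K x y b = \sum_b \sum_x \sum_y K x y b.
Proof.
under eq_bigr do rewrite exchange_big. exact: exchange_big.
Qed.

Lemma swap6 (X I : finType) (H : X -> X -> I -> I -> I -> I -> int) :
  \sum_x \sum_y \sum_a \sum_b \sum_c \sum_d H x y a b c d =
  \sum_a \sum_b \sum_c \sum_d \sum_x \sum_y H x y a b c d.
Proof.
rewrite swap2.
under eq_bigr do rewrite swap2.
under eq_bigr do under eq_bigr do rewrite swap2.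
under eq_bigr do under eq_bigr do under eq_bigr do rewrite swap2.
by [].
Qed.

Lemma pow4_sum (I : finType) (g : I -> int) :
  (\sum_a g a) ^+ 4 = \sum_a \sum_b \sum_c \sum_d (g a * g b * g c * g d).
Proof.
rewrite (_ : 4 = 1 + 1 + 1 + 1)%N // !exprD !expr1.
rewrite big_distrlr /=.
rewrite !mulr_suml; apply: eq_bigr => a _.
rewrite !mulr_suml; apply: eq_bigr => b _.
rewrite -mulrA big_distrlr /= mulr_sumr; apply: eq_bigr => c _.
rewrite mulr_sumr; apply: eq_bigr => d _.
by rewrite !mulrA.
Qed.

Lemma sum4_sq (X : finType) (n : nat) (V : X -> 'I_n -> int) :
  \sum_x \sum_y (\sum_a V x a * V y a) ^+ 4 =
  \sum_a \sum_b \sum_c \sum_d (\sum_x V x a * V x b * V x c * V x d) ^+ 2.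
Proof.
under eq_bigr do under eq_bigr do rewrite pow4_sum.
rewrite swap6.
apply: eq_bigr => a _; apply: eq_bigr => b _; apply: eq_bigr => c _; apply: eq_bigr => d _.
rewrite expr2 big_distrlr /=.
apply: eq_bigr => x _; apply: eq_bigr => y _. ring.
Qed.
Lemma sos_sum (I : finType) (P : pred I) (f : I -> int) (k : int) :
  0 <= \sum_(i | P i) f i ^+ 2 - 2 * k * \sum_(i | P i) f i + k ^+ 2 *+ #|P|.
Proof.
have H : 0 <= \sum_(i | P i) (f i - k) ^+ 2 by apply: sumr_ge0 => i _; exact: sqr_ge0.
suff <- : \sum_(i | P i) (f i - k) ^+ 2 = \sum_(i | P i) f i ^+ 2 - 2 * k * \sum_(i | P i) f i + k ^+ 2 *+ #|P| by [].
rewrite mulr_sumr -sumrB -sumr_const -big_split /=.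
apply: eq_bigr => i _; ring.
Qed.

Lemma card_neq (n : nat) (a : 'I_n) : #|[pred c : 'I_n | c != a]| = n.-1.
Proof. rewrite -[in RHS](card_ord n) -(cardC1 a); by apply: eq_card => c. Qed.


Lemma core (m : nat) (V : 'I_m * 'I_19 -> 'I_19 -> int)
  (Hent : forall x a, V x a ^+ 4 = V x a ^+ 2)
  (Hnorm : forall x, \sum_a V x a ^+ 2 = 9)
  (Hrow : forall x, \sum_y (\sum_a V x a * V y a) ^+ 4 = 729 * (m%:Z + 8)) :
  (m <= 27)%N.
Proof.
pose U := fun a c => \sum_x V x a ^+ 2 * V x c ^+ 2.
have cardX : #|{: 'I_m * 'I_19}| = (m * 19)%N by rewrite card_prod !card_ord.
have S4e : \sum_x \sum_y (\sum_a V x a * V y a) ^+ 4 = 729 * 19 * m%:Z * (m%:Z + 8).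
  under eq_bigr do rewrite Hrow.
  rewrite sumr_const cardX -[_ *+ (m * 19)%N]mulr_natr natrM !natz. ring.
have pat := @pattern_le 19 (fun a b c d => (\sum_x V x a * V x b * V x c * V x d) ^+ 2).
rewrite -sum4_sq S4e in pat.
have {}pat : \sum_a (U a a ^+ 2 + 3 * \sum_(c | c != a) U a c ^+ 2) <= 729 * 19 * m%:Z * (m%:Z + 8).
  apply: le_trans (pat _); last by move=> *; exact: sqr_ge0.
  rewrite le_eqVlt; apply/orP; left; apply/eqP.
  apply: eq_bigr => a _; congr (_ + _).
    by congr (_ ^+ 2); apply: eq_bigr => x _; ring.
  rewrite mulr_sumr; apply: eq_bigr => c _.
  have e1 : \sum_x V x a * V x a * V x c * V x c = U a c by apply: eq_bigr => x _; ring.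
  have e2 : \sum_x V x a * V x c * V x a * V x c = U a c by apply: eq_bigr => x _; ring.
  have e3 : \sum_x V x a * V x c * V x c * V x a = U a c by apply: eq_bigr => x _; ring.
  rewrite e1 e2 e3; ring.
have SU1 : \sum_a U a a = 9 * 19 * m%:Z.
  rewrite /U exchange_big /=.
  under eq_bigr => x _ do (under eq_bigr => a _ do rewrite -exprD /= Hent).
  under eq_bigr do rewrite Hnorm.
  rewrite sumr_const cardX -[_ *+ (m * 19)%N]mulr_natr natrM !natz. ring.
have SU2 : \sum_a \sum_c U a c = 81 * 19 * m%:Z.
  rewrite /U.
  under eq_bigr do rewrite exchange_big /=.
  rewrite exchange_big /=.
  under eq_bigr => x _ do rewrite -big_distrlr /= Hnorm.
  rewrite sumr_const cardX -[_ *+ (m * 19)%N]mulr_natr natrM !natz. ring.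
have SU3 : \sum_a \sum_(c | c != a) U a c = 72 * 19 * m%:Z.
  have : \sum_a \sum_c U a c = \sum_a U a a + \sum_a \sum_(c | c != a) U a c.
    rewrite -big_split /=; apply: eq_bigr => a _; by rewrite (bigD1 a).
  rewrite SU1 SU2 => h.
  have -> : \sum_a \sum_(c | c != a) U a c = 81 * 19 * m%:Z - 9 * 19 * m%:Z by rewrite h; ring.
  ring.
have sos1 := @sos_sum _ predT (fun a => U a a) (9 * m%:Z).
have e1 : forall F : 'I_19 -> int, \sum_(i | predT i) F i = \sum_i F i by [].
have c19 : #|@predT 'I_19| = 19%N.
  rewrite -[RHS](card_ord 19); apply: eq_card => x; by [].
rewrite !e1 SU1 c19 in sos1.
have sos2 : 0 <= \sum_a (\sum_(c | c != a) U a c ^+ 2 - 2 * (4 * m%:Z) * \sum_(c | c != a) U a c + (4 * m%:Z) ^+ 2 *+ 18).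
  apply: sumr_ge0 => a _.
  have := @sos_sum _ [pred c | c != a] (U a) (4 * m%:Z).
  by rewrite card_neq.
rewrite big_split /= sumrB -mulr_sumr SU3 sumr_const card_ord in sos2.
set A := \sum_a U a a ^+ 2 in sos1.
set B := \sum_a \sum_(c | c != a) U a c ^+ 2 in sos2.
have pe : \sum_a (U a a ^+ 2 + 3 * \sum_(c | c != a) U a c ^+ 2) = A + 3 * B.
  by rewrite big_split /= -mulr_sumr.
rewrite pe in pat.
rewrite -(mulr_natr ((9 * m%:Z)^+2) 19) in sos1.
rewrite -(mulr_natr (((4 * m%:Z)^+2) *+ 18) 19) -(mulr_natr ((4 * m%:Z)^+2) 18) in sos2.
nia.
Qed.


Lemma unb_int (n : nat) (A B : 'M[int]_n) : unbiased 9 A B ->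
  exists M : 'M[int]_n, weighing 9 M /\ forall i j, (A *m B^T) i j = 3 * M i j.
Proof.
case=> M [wM E]; exists M; split => // i j.
have s3 : sqrtC (9%:R : algC) = 3.
  rewrite (_ : 9%:R = (3 : algC) ^+ 2); last by rewrite -natrX.
  by rewrite sqrCK // ler0n.
have := congr1 (fun X : 'M[algC]_n => X i j) E; rewrite !mxE s3 => h.
apply: (@intr_inj algC).
rewrite rmorphM /= -h mulrA divff ?mul1r //.
by rewrite pnatr_eq0.
Qed.

Lemma ent4 (z : int) : z \in [:: 1; -1; 0] -> z ^+ 4 = z ^+ 2.
Proof. by rewrite !inE => /or3P [] /eqP ->. Qed.

Lemma mulmxT_entry (n : nat) (A B : 'M[int]_n) i j :
  (A *m B^T) i j = \sum_a A i a * B j a.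
Proof. rewrite mxE; apply: eq_bigr => a _; by rewrite mxE. Qed.

Lemma row_sq9 (n : nat) (M : 'M[int]_n) i : weighing 9 M -> \sum_a M i a ^+ 2 = 9.
Proof.
case=> _ E; have := congr1 (fun X : 'M[int]_n => X i i) E.
rewrite mulmxT_entry mxE eqxx mulr1n => <-.
by apply: eq_bigr => a _; rewrite expr2.
Qed.

Lemma row4_same (n : nat) (M : 'M[int]_n) i : weighing 9 M ->
  \sum_j ((M *m M^T) i j) ^+ 4 = 6561.
Proof.
case=> _ E; rewrite E (bigD1 i) //= big1 => [|j ji]; rewrite mxE.
  by rewrite eqxx mulr1n addr0.
by rewrite eq_sym (negbTE ji) mulr0n expr0n.
Qed.

Lemma row4_diff (n : nat) (A B : 'M[int]_n) i : unbiased 9 A B ->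
  \sum_j ((A *m B^T) i j) ^+ 4 = 729.
Proof.
case/unb_int => M [wM E].
have [Hent _] := wM.
under eq_bigr => j _ do rewrite E exprMn (ent4 (Hent i j)).
by rewrite -mulr_sumr row_sq9.
Qed.


Lemma MUWM_bound (s : seq 'M[int]_19) : MUWM 9 s -> (size s <= 27)%N.
Proof.
case=> uq [Hw Hu].
pose W (p : 'I_(size s)) := nth 0 s p.
have Wi p : W p \in s by exact: mem_nth.
pose V (x : 'I_(size s) * 'I_19) a := W x.1 x.2 a.
apply: (@core _ V).
- move=> x a; have [He _] := Hw _ (Wi x.1); exact: ent4 (He x.2 a).
- move=> x; exact: row_sq9 (Hw _ (Wi x.1)).
move=> [p r].
rewrite -(pair_big xpredT xpredT (fun q r' => (\sum_a V (p, r) a * V (q, r') a) ^+ 4)) /=.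
have e : forall q, \sum_r' (\sum_a V (p, r) a * V (q, r') a) ^+ 4 = \sum_r' ((W p *m (W q)^T) r r') ^+ 4.
  by move=> q; apply: eq_bigr => r' _; rewrite mulmxT_entry.
under eq_bigr do rewrite e.
rewrite (bigD1 p) //= row4_same //.
have -> : \sum_(q | q != p) \sum_r' ((W p *m (W q)^T) r r') ^+ 4 = \sum_(q | q != p) 729.
  apply: eq_bigr => q qp; apply: row4_diff; apply: Hu; rewrite ?Wi //.
  by rewrite /W nth_uniq // eq_sym.
  rewrite sumr_const card_neq -[_ *+ _]mulr_natr natz.
  have := ltn_ord p. lia.
exact: Hw _ (Wi p).
Qed.


Definition mxl (l : seq (seq int)) : 'M[int]_19 :=
  \matrix_(i, j) nth 0 (nth [::] l i) j.

Definition dotl (u v : seq int) : int :=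
  foldr (fun k acc => nth 0 u k * nth 0 v k + acc) 0 (iota 0 19).

Lemma sum_foldr (F : nat -> int) (l : seq nat) :
  \sum_(k <- l) F k = foldr (fun k acc => F k + acc) 0 l.
Proof. by elim: l => [|x l IH]; rewrite ?big_nil ?big_cons ?IH. Qed.

Lemma mxl_prod (a b : seq (seq int)) (i j : 'I_19) :
  (mxl a *m (mxl b)^T) i j = dotl (nth [::] a i) (nth [::] b j).
Proof.
rewrite mulmxT_entry /dotl -sum_foldr.
transitivity (\sum_(k < 19) nth 0 (nth [::] a i) k * nth 0 (nth [::] b j) k).
  by apply: eq_bigr => k _; rewrite !mxE.
by rewrite -(big_mkord (fun _ => true) (fun k => nth 0 (nth [::] a i) k * nth 0 (nth [::] b j) k)) /index_iota subn0.
Qed.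

Definition ent_ok (z : int) : bool := z \in [:: 1; -1; 0].

Definition wcheck (a : seq (seq int)) : bool :=
  all (fun i => all (fun j => ent_ok (nth 0 (nth [::] a i) j) &&
     (dotl (nth [::] a i) (nth [::] a j) == (if i == j then 9 else 0)))
     (iota 0 19)) (iota 0 19).

Lemma iota19 (i : 'I_19) : (i : nat) \in iota 0 19.
Proof. by rewrite mem_iota add0n ltn_ord. Qed.

Lemma wcheck_ok a : wcheck a -> weighing 9 (mxl a).
Proof.
move=> /allP H; split.
  move=> i j; rewrite mxE.
  by have /andP [] := allP (H _ (iota19 i)) _ (iota19 j).
apply/matrixP => i j; rewrite mxl_prod mxE.
have /andP [_ /eqP ->] := allP (H _ (iota19 i)) _ (iota19 j).
have -> : ((i : nat) == j) = (i == j) by [].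
by case: (i == j).
Qed.

Definition div3 (z : int) : int := if z == 3 then 1 else if z == -3 then -1 else 0.

Definition mdiv (a b : seq (seq int)) : seq (seq int) :=
  [seq [seq div3 (dotl (nth [::] a i) (nth [::] b j)) | j <- iota 0 19] | i <- iota 0 19].

Definition ucheck (a b : seq (seq int)) : bool :=
  let c := mdiv a b in wcheck c &&
  all (fun i => all (fun j => dotl (nth [::] a i) (nth [::] b j) == 3 * nth 0 (nth [::] c i) j)
     (iota 0 19)) (iota 0 19).

Lemma ucheck_ok a b : ucheck a b -> unbiased 9 (mxl a) (mxl b).
Proof.
case/andP => wc /allP H; exists (mxl (mdiv a b)); split; first exact: wcheck_ok.
have E : mxl a *m (mxl b)^T = \matrix_(i, j) (3 * nth 0 (nth [::] (mdiv a b) i) j).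
  apply/matrixP => i j; rewrite mxl_prod mxE.
  by have /eqP -> := allP (H _ (iota19 i)) _ (iota19 j).
rewrite E; apply/matrixP => i j; rewrite !mxE.
have s3 : sqrtC (9%:R : algC) = 3.
  rewrite (_ : 9%:R = (3 : algC) ^+ 2); last by rewrite -natrX.
  by rewrite sqrCK // ler0n.
rewrite s3 rmorphM /= mulrA mulVf ?mul1r //.
by rewrite pnatr_eq0.
Qed.

Definition norml (a : seq (seq int)) : seq (seq int) :=
  [seq [seq nth 0 (nth [::] a i) j | j <- iota 0 19] | i <- iota 0 19].

Definition flatm (M : 'M[int]_19) : seq (seq int) :=
  [seq [seq M (inord i) (inord j) | j <- iota 0 19] | i <- iota 0 19].

Lemma flatm_mxl a : flatm (mxl a) = norml a.
Proof.
apply/eq_in_map => i; rewrite mem_iota => /andP [_ hi].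
apply/eq_in_map => j; rewrite mem_iota => /andP [_ hj].
by rewrite mxE !inordK.
Qed.

Lemma muwm_ok (ls : seq (seq (seq int))) :
  uniq (map norml ls) -> all wcheck ls ->
  all (fun a => all (fun b => (a == b) || ucheck a b) ls) ls ->
  MUWM 9 (map mxl ls).
Proof.
move=> U /allP Hw /allP Hu; split; last split.
- apply: (@map_uniq _ _ flatm); rewrite -map_comp.
  by rewrite (eq_map flatm_mxl).
- by move=> W /mapP [a al ->]; apply: wcheck_ok; apply: Hw.
move=> W1 W2 /mapP [a al ->] /mapP [b bl ->] ne.
have /orP [/eqP ab|] := allP (Hu _ al) _ bl; last exact: ucheck_ok.
by rewrite ab eqxx in ne.
Qed.

Lemma maxex (P : nat -> Prop) (b k0 : nat) : P k0 -> (forall k, P k -> (k <= b)%N) ->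
  exists k, P k /\ forall j, P j -> (j <= k)%N.
Proof.
move=> Pk0 Hb.
have H : forall d k, (b - k <= d)%N -> P k -> exists k', P k' /\ forall j, P j -> (j <= k')%N.
  elim=> [|d IH] k hd Pk.
    exists k; split => // j Pj; have := Hb _ Pj; have := Hb _ Pk; lia.
  case: (classic (exists j, P j /\ (k < j)%N)) => [[j [Pj kj]]|nx].
    apply: (IH j) => //; have := Hb _ Pj; lia.
  exists k; split => // j Pj; case: (leqP j k) => // kj; exfalso; apply: nx; by exists j.
exact: (H (b - k0)%N k0).
Qed.

Definition sol : seq (seq (seq int)) := [:: [:: [:: 1; 0; 0; -1; 0; -1; 1; 0; 0; -1; 1; 1; 0; -1; 1; 0; 0; 0; 0];
    [:: 1; 0; -1; 1; 0; 0; -1; 0; 1; 0; 0; 1; 0; 1; 1; 0; 0; -1; 0];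
    [:: 1; 1; 0; 1; 0; 1; 0; 0; 0; 0; 0; 0; 1; -1; 0; 0; 1; 1; 1];
    [:: 0; 1; -1; 0; 1; 0; 1; 0; 0; -1; 0; 0; -1; 1; -1; 0; 1; 0; 0];
    [:: 0; 1; 0; 0; 0; -1; 0; 1; 0; 1; -1; 0; 0; -1; 0; 0; 1; -1; -1];
    [:: 1; 0; 0; -1; 1; 0; 0; 1; 0; 1; 1; -1; 1; 1; 0; 0; 0; 0; 0];
    [:: 0; 1; 0; 0; -1; 0; 1; -1; -1; 1; 0; 0; 0; 1; 1; -1; 0; 0; 0];
    [:: 1; 0; 1; 0; -1; 0; 0; 1; -1; -1; -1; 0; 0; 1; 0; 1; 0; 0; 0];
    [:: 1; 0; -1; 0; 0; 1; 0; 0; -1; 0; 0; -1; -1; -1; 0; 0; -1; -1; 0];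
    [:: 0; 0; 1; 1; 1; 0; 0; 0; -1; 1; 1; 1; -1; 0; 0; 1; 0; 0; 0];
    [:: 1; 0; 0; -1; 0; 0; 0; -1; 1; 1; -1; 0; -1; 0; 0; 1; 0; 1; 0];
    [:: 0; 1; 1; 0; 1; 0; -1; -1; 0; -1; 0; -1; 0; 0; 1; 0; 0; 0; -1];
    [:: 1; 0; 1; 1; 0; 0; 1; 0; 1; 0; 0; 0; 0; 0; -1; -1; -1; 0; -1];
    [:: 1; -1; 0; 0; 0; -1; -1; -1; -1; 0; 0; 0; 0; 0; -1; -1; 1; 0; 0];
    [:: 0; 0; 1; 0; -1; 0; 0; 0; 1; 0; 1; -1; -1; 0; 0; 0; 1; -1; 1];
    [:: 0; 0; -1; 1; -1; -1; 0; 0; 0; 0; 1; -1; 0; 0; 0; 1; 0; 1; -1];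
    [:: 0; 1; 0; -1; -1; 1; -1; 0; 0; 0; 1; 1; 0; 0; -1; 0; 0; 0; -1];
    [:: 0; 1; 0; 0; 0; -1; -1; 1; 0; 0; 0; 0; -1; 0; 0; -1; -1; 1; 1];
    [:: 0; 1; 0; 0; 0; -1; 0; -1; 0; 0; 0; 0; 1; 0; -1; 1; -1; -1; 1]];
 [:: [:: 1; -1; 0; 0; 0; 0; 0; 0; 0; -1; 1; -1; 0; 1; -1; 1; 1; 0; 0];
    [:: 1; 0; 0; 0; 1; 0; -1; 0; 0; -1; -1; -1; 0; -1; 0; -1; 0; 0; 1];
    [:: 0; 0; 1; 1; 1; 1; 0; 0; 0; 1; 0; -1; 1; 0; 1; 1; 0; 0; 0];
    [:: 1; -1; 1; -1; 0; 1; 0; 0; 1; 0; 0; 1; 0; -1; 0; 0; 0; 0; -1];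
    [:: 0; 1; 1; 0; -1; 1; 0; 1; 0; 0; 0; -1; -1; 0; -1; 0; -1; 0; 0];
    [:: 0; 1; 0; 1; 0; 0; 0; 1; 1; -1; -1; 1; 0; 0; 0; 1; 1; 0; 0];
    [:: 1; 1; 1; 0; 0; 0; -1; -1; -1; 0; 0; 1; 0; 1; 0; 0; 0; -1; 0];
    [:: 0; 1; 0; 0; 0; 0; 1; -1; 1; 0; 0; -1; 0; 0; 0; -1; 1; -1; -1];
    [:: 0; 0; 0; 1; 1; 1; 1; 0; 0; 0; 1; 1; 0; 0; -1; -1; 0; 0; 1];
    [:: 0; 1; 0; -1; 0; 0; -1; 0; 1; 1; 1; 0; 0; 0; 0; 0; 1; 1; 1];
    [:: 0; 1; 0; -1; 1; 0; 1; -1; 0; -1; 0; 0; 0; 0; 0; 1; -1; 1; 0];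
    [:: 1; 1; -1; 0; 0; 0; 0; 1; -1; 0; 1; 0; 1; -1; 0; 0; 0; 0; -1];
    [:: 1; 0; 0; 0; 0; -1; 1; 0; 0; 1; 0; 0; -1; -1; 0; 1; 0; -1; 1];
    [:: 1; 0; 1; 0; 0; -1; 1; 1; 0; 0; 0; 0; 0; 1; 1; -1; 0; 1; 0];
    [:: 0; 0; 0; 1; 1; -1; -1; 0; 1; 0; 1; 0; -1; 0; 0; 0; -1; 0; -1];
    [:: 0; 0; 0; 0; 1; 0; 0; 0; -1; 1; -1; 0; -1; 0; -1; 0; 1; 1; -1];
    [:: 1; 0; -1; 0; 0; 0; 0; 0; 1; 1; -1; 0; 1; 1; -1; 0; -1; 0; 0];
    [:: 1; 0; -1; 1; -1; 1; 0; -1; 0; 0; 0; 0; -1; 0; 1; 0; 0; 1; 0];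
    [:: 0; 0; 1; 1; -1; -1; 0; -1; 0; 0; 0; 0; 1; -1; -1; 0; 0; 1; 0]];
 [:: [:: 0; 1; 1; 0; 0; -1; 0; 0; 0; 0; 1; -1; 0; 1; 0; -1; -1; -1; 0];
    [:: 1; 1; 0; 0; 0; 0; 0; 0; -1; 0; 1; 1; -1; 0; 0; -1; 1; 1; 0];
    [:: 0; 1; 0; 1; 0; 0; 0; 0; 1; 1; -1; 0; 0; 1; 1; 0; 0; 1; 1];
    [:: 0; 0; -1; 0; 0; 0; 1; 0; 0; -1; 1; -1; -1; 0; 1; 1; 0; 0; 1];
    [:: 0; 0; -1; 1; 0; 1; 0; -1; 1; 0; 1; 0; 0; 1; -1; 0; 0; 0; -1];
    [:: 0; 1; -1; 0; 0; -1; -1; -1; 0; -1; -1; 0; 0; 0; 0; 0; 1; -1; 0];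
    [:: 1; 0; -1; 0; 1; 0; 1; 1; 0; 0; -1; -1; 0; 0; 0; -1; 0; 0; -1];
    [:: 1; 0; 1; 0; -1; 1; 1; -1; 0; 0; -1; 0; -1; 0; 0; 0; 0; -1; 0];
    [:: 1; 0; 0; 0; 0; 0; 0; 0; 1; 1; 1; 0; 1; -1; 1; 0; 1; -1; 0];
    [:: 1; -1; -1; 0; -1; -1; -1; 0; 0; 1; 0; 0; -1; 0; 0; 0; -1; 0; 0];
    [:: 1; -1; 1; 0; 1; -1; 0; -1; 1; -1; 0; 0; 0; 0; 0; 0; 0; 1; 0];
    [:: 0; 0; 1; 1; 0; 0; -1; 1; 0; 0; 0; -1; -1; 0; 0; 1; 1; 0; -1];
    [:: 1; 1; 0; -1; -1; 0; 0; 0; 0; 0; 0; -1; 1; 0; -1; 1; 0; 1; 0];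
    [:: 1; 0; 0; 0; 1; 0; 0; 1; 0; 0; 0; 1; 0; 1; -1; 1; 0; -1; 1];
    [:: 1; 0; 0; 1; 0; 1; -1; 0; -1; -1; 0; 0; 1; 0; 1; 0; -1; 0; 0];
    [:: 0; 1; 0; -1; 1; 1; -1; 0; 1; 0; 0; 0; -1; -1; 0; 0; -1; 0; 0];
    [:: 0; 1; 0; 1; 0; -1; 1; 0; 0; 0; 0; 1; 0; -1; 0; 1; -1; 0; -1];
    [:: 0; 0; 0; 1; -1; 0; 0; 1; 1; -1; 0; 0; 0; -1; -1; -1; 0; 0; 1];
    [:: 0; 0; 0; 1; 1; 0; 0; -1; -1; 1; 0; -1; 0; -1; -1; 0; 0; 0; 1]];
 [:: [:: 0; 0; -1; 0; 1; 1; 0; 0; 0; 0; 1; -1; 0; 0; 1; 0; -1; 1; -1];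
    [:: 0; 0; -1; 1; -1; -1; 1; 0; 0; 0; -1; 0; 0; 0; 0; -1; -1; 1; 0];
    [:: 0; 1; 1; 0; 1; 0; 1; 0; 0; 1; 0; 1; 1; 1; 0; 0; -1; 0; 0];
    [:: 1; -1; 0; -1; 0; 0; 0; 0; 0; 0; -1; 0; 1; 1; 0; 0; 1; 1; -1];
    [:: 0; 0; 0; 0; 0; 0; 1; -1; 0; 1; 0; 1; -1; -1; 1; 0; 1; 0; -1];
    [:: 1; 1; -1; 0; 1; -1; 0; 1; 0; 0; 0; 0; 0; 0; 1; 0; 1; 0; 1];
    [:: 1; 0; 0; 0; 0; 0; 0; 1; 1; 0; -1; 0; -1; 0; 0; 1; -1; -1; -1];
    [:: 1; 0; 0; -1; -1; 0; 0; -1; -1; 0; 0; 0; 0; 0; 1; 1; -1; 0; 1];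
    [:: 0; 1; 0; 1; -1; 1; 1; 0; 0; 0; 0; -1; 0; 1; 0; 1; 1; 0; 0];
    [:: 1; -1; 1; 1; 0; 1; 0; 0; 1; 0; 0; 0; 0; 0; 1; -1; 0; 0; 1];
    [:: 0; 1; 1; 0; -1; 0; -1; 1; -1; 0; 0; 0; 0; 0; 1; -1; 0; 0; -1];
    [:: 1; 0; 0; 1; 0; -1; 0; -1; 0; -1; 1; 0; 1; 0; 0; 0; 0; -1; -1];
    [:: 0; 0; 1; 1; 1; 0; 0; 0; -1; -1; -1; 0; 0; -1; 0; 1; 0; 1; 0];
    [:: 0; 0; 0; 0; 1; 0; 0; -1; -1; 0; -1; -1; -1; 1; 0; -1; 0; -1; 0];
    [:: 1; 1; 0; -1; 0; 1; 1; 0; 0; -1; 0; 0; 0; -1; -1; -1; 0; 0; 0];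
    [:: 1; 0; -1; 1; 0; 1; -1; 0; -1; 1; 0; 1; 0; 0; -1; 0; 0; 0; 0];
    [:: 1; 0; 1; 0; 0; -1; 0; 0; 0; 1; 1; -1; -1; 0; -1; 0; 0; 1; 0];
    [:: 0; 1; 0; 0; 0; 0; -1; -1; 1; -1; 0; 1; -1; 1; 0; 0; 0; 1; 0];
    [:: 0; 1; 0; 0; 0; 0; -1; -1; 1; 1; -1; -1; 1; -1; 0; 0; 0; 0; 0]];
 [:: [:: 0; 0; 0; 0; -1; 1; 0; 0; -1; 0; 1; 0; 1; -1; -1; 0; -1; 0; 1];
    [:: 1; 0; 0; 0; 1; -1; 0; 0; -1; 1; 0; 0; 0; 0; -1; 0; -1; -1; -1];
    [:: 1; 1; 1; 1; 0; -1; 0; 0; 1; 0; 1; 1; 0; 0; 0; 0; 0; 0; 1];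
    [:: 0; 0; -1; 1; 1; 1; 0; 0; 0; -1; 0; 1; -1; 0; 0; 1; -1; 0; 0];
    [:: 1; 1; 0; -1; 0; 1; 0; -1; 0; 0; 1; -1; -1; 1; 0; 0; 0; 0; 0];
    [:: 0; 0; 1; 0; 0; 1; 0; 1; 1; 0; 0; 0; 1; 1; -1; 1; 0; 0; -1];
    [:: 0; 0; 0; 1; 1; 1; -1; -1; 0; 0; 0; 0; 1; 0; 0; -1; 1; -1; 0];
    [:: 0; 0; 0; 0; 0; 1; 1; 1; 1; 1; 0; 0; -1; -1; 0; -1; 0; -1; 0];
    [:: 1; 0; 1; 0; 0; 1; 0; 0; -1; 1; -1; 1; 0; 0; 1; 0; 0; 1; 0];
    [:: 0; 0; -1; 0; 0; 0; 1; 0; 0; 1; 0; 0; 1; 1; 1; 1; 0; -1; 1];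
    [:: 1; 0; -1; 0; 0; 0; 1; -1; 1; 0; 0; 0; 1; -1; 0; 0; 0; 1; -1];
    [:: 0; 1; 0; -1; 1; 0; 0; 1; 0; -1; 0; 0; 1; 0; 1; -1; -1; 0; 0];
    [:: 0; 1; 0; 0; -1; 0; 1; 0; -1; -1; 0; 1; 0; 0; 0; 0; 1; -1; -1];
    [:: 0; 0; 0; 1; 1; 0; 1; 1; -1; 0; 1; -1; 0; 0; 0; 0; 1; 1; 0];
    [:: 1; -1; 1; 0; 0; 0; 0; 0; 0; -1; 0; -1; 0; -1; 1; 1; 0; -1; 0];
    [:: 1; -1; 0; 0; 0; 0; 1; 0; 0; -1; -1; 0; 0; 1; -1; -1; 0; 0; 1];
    [:: 0; 1; 0; -1; 1; 0; 0; 0; 0; 0; -1; 0; 0; -1; -1; 1; 1; 0; 1];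
    [:: 1; 1; -1; 1; -1; 0; -1; 1; 0; 0; -1; -1; 0; 0; 0; 0; 0; 0; 0];
    [:: 1; -1; -1; -1; 0; 0; -1; 1; 0; 0; 1; 1; 0; 0; 0; 0; 1; 0; 0]];
 [:: [:: 0; 0; 0; 1; 0; -1; -1; 0; -1; 0; 0; -1; 1; -1; 1; 0; 1; 0; 0];
    [:: 0; 1; 0; 0; -1; -1; -1; 0; 1; 0; 0; 0; -1; -1; -1; 1; 0; 0; 0];
    [:: 0; 0; 1; 0; 0; 0; 1; 0; 0; 1; 1; 0; 1; 0; -1; 1; 1; 0; 1];
    [:: 0; 1; 0; 1; 0; 1; 0; 0; -1; -1; -1; 0; 0; 0; -1; 0; 0; -1; 1];
    [:: 0; 0; -1; 1; 0; 0; 0; 1; 0; 1; 1; -1; 0; 0; -1; -1; -1; 0; 0];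
    [:: 0; 0; 0; 1; 0; 0; 1; 1; 0; 0; 0; 1; -1; -1; 1; 0; 0; 1; 1];
    [:: 1; 0; 0; -1; 1; -1; 0; 1; -1; -1; 0; 0; 0; 0; -1; 0; 0; 1; 0];
    [:: 1; 1; 0; -1; -1; 0; 1; 1; 0; 0; 0; -1; 0; 0; 1; 0; 0; -1; 0];
    [:: 0; 1; 0; 0; 1; 0; -1; 0; 0; 0; 1; 0; 0; 1; 1; 1; -1; 0; 1];
    [:: 1; 1; 0; 1; -1; 0; 0; 0; 0; 0; 0; 1; 1; 1; 0; 0; 0; 1; -1];
    [:: 1; 0; 0; 1; 1; 0; 1; -1; 0; 0; 0; -1; -1; 0; 0; 1; 0; 0; -1];
    [:: 0; 1; -1; -1; 0; 1; 0; -1; -1; 1; 0; 0; 0; -1; 0; 0; 0; 1; 0];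
    [:: 1; -1; 1; 0; -1; 1; -1; 0; -1; 0; 1; 0; -1; 0; 0; 0; 0; 0; 0];
    [:: 1; 0; 0; 0; 1; 1; -1; 1; 1; 1; -1; 0; 0; 0; 0; 0; 1; 0; 0];
    [:: 0; 1; 1; 0; 1; 0; 0; 0; 0; 0; 1; 1; 0; -1; 0; -1; 0; -1; -1];
    [:: 1; -1; -1; 0; 0; 0; 0; 0; 0; 0; 0; 1; 1; -1; 0; 1; -1; -1; 0];
    [:: 0; 0; 1; 0; 0; 1; 0; 0; 1; -1; 0; -1; 1; -1; 0; 0; -1; 1; 0];
    [:: 1; 0; -1; 0; 0; 0; 0; -1; 1; -1; 1; 0; 0; 0; 0; -1; 1; 0; 1];
    [:: 1; 0; 1; 0; 0; -1; 0; -1; 0; 1; -1; 0; 0; 0; 0; -1; -1; 0; 1]]].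

Lemma sol_ok : MUWM 9 (map mxl sol).
Proof. apply: muwm_ok; vm_compute; reflexivity. Qed.

Theorem proposition6p8 :
  exists m : nat, is_Wmax 19 9 m /\ (6 <= m <= 27)%N.
Proof.
have P6 : exists s : seq 'M[int]_19, MUWM 9 s /\ size s = 6%N.
  by exists (map mxl sol); split; [exact: sol_ok | rewrite size_map].
have Hb : forall k, (exists s : seq 'M[int]_19, MUWM 9 s /\ size s = k) -> (k <= 27)%N.
  by move=> k [s [Hs <-]]; exact: MUWM_bound.
have [k [Pk Hk]] := @maxex (fun k => exists s : seq 'M[int]_19, MUWM 9 s /\ size s = k) 27 6 P6 Hb.
exists k; split.
  split => // s Hs; exact: Hk (ex_intro _ s (conj Hs erefl)).
apply/andP; split; first exact: Hk _ P6.
by case: Pk => s [Hs <-]; exact: MUWM_bound.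
Qed.
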